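(* For every integer $n\ge 2$, the chromatic number of $H_2(n,n-1)$ equals $4$.
   Context: For $x,y\in\mathbb{Z}_2^n$, $\mathrm{d}(x,y)=|\{i: x_i\neq y_i\}|$ is the Hamming distance. $H_2(n,n-1)$ is the simple undirected graph with vertex set $\mathbb{Z}_2^n$ in which $x,y$ are adjacent iff $\mathrm{d}(x,y)\ge n-1$. *)

(* Defs.v *)
From mathcomp Require Import all_boot.
Set Implicit Arguments. Unset Strict Implicit. Unset Printing Implicit Defensive.

Definition vec (n : nat) := {ffun 'I_n -> bool}.

Definition hamming (n : nat) (x y : vec n) : nat := #|[set i | x i != y i]|.

(* Adjacency of H_2(n, n-1): d(x,y) >= n-1 (and x != y, automatic for n >= 2;
   included to keep the graph simple/loopless for all n). *)
Definition H2adj (n : nat) : rel (vec n) :=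
  fun x y => (x != y) && (n.-1 <= hamming x y).

Definition proper_colouring (T : finType) (e : rel T) (k : nat) (c : T -> 'I_k) :=
  forall x y, e x y -> c x != c y.

Definition colourable (T : finType) (e : rel T) (k : nat) :=
  exists c : T -> 'I_k, proper_colouring e c.

Definition chromatic_number_is (T : finType) (e : rel T) (k : nat) :=
  colourable e k /\ forall j, j < k -> ~ colourable e j.

(* Main.v *)
Require Import Defs.
From Stdlib Require Import ZArith Lia.
From mathcomp Require Import all_boot.
From mathcomp Require Import zify.

Set Implicit Arguments. Unset Strict Implicit. Unset Printing Implicit Defensive.

Definition flip n (x : vec n) (i : 'I_n) : vec n :=
  [ffun k => if k == i then ~~ x k else x k].

Lemma flipC n (x : vec n) i j : flip (flip x i) j = flip (flip x j) i.
Proof.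
apply/ffunP=> k; rewrite !ffunE.
by case: (k =P i); case: (k =P j) => //.
Qed.

Lemma flipK n (x : vec n) i : flip (flip x i) i = x.
Proof. by apply/ffunP=> k; rewrite !ffunE; case: (k =P i) => // ->; rewrite ?eqxx negbK. Qed.

Lemma flip_im n (x : vec n) i (j : 'I_n) : i != j -> flip x i j = x j.
Proof. by move=> H; rewrite ffunE eq_sym (negbTE H). Qed.

Lemma flip_at n (x : vec n) i : flip x i i = ~~ x i.
Proof. by rewrite ffunE eqxx. Qed.

Definition adj (d : Z) : Z := (3 * ((d+1)/3))%Z.
Arguments adj : simpl never.

Lemma r_step (d a b : Z) : (d mod 3 <> 0)%Z -> ((d + a - b) mod 3 <> 0)%Z ->
  Z.abs a = 1%Z -> Z.abs b = 1%Z -> adj d = adj (d + a - b).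
Proof. rewrite /adj; intros. Z.div_mod_to_equations. lia. Qed.

Lemma r_spec (d : Z) : (d mod 3 <> 0)%Z -> Z.abs (d - adj d) = 1%Z.
Proof. rewrite /adj; intros. Z.div_mod_to_equations. lia. Qed.

Lemma height n (c : vec n -> 'I_3) m : m <= n ->
  (forall x (i : 'I_n), i < m -> c x != c (flip x i)) ->
  exists h : vec n -> Z,
    (forall x (i : 'I_n), i < m -> Z.abs (h (flip x i) - h x) = 1%Z) /\
    (forall x, ((h x - Z.of_nat (c x)) mod 3 = 0)%Z).
Proof.
elim: m => [|m IH] lemn Hc.
  exists (fun x => Z.of_nat (c x)); split => // x.
  by rewrite Z.sub_diag.
have [h [Hh1 Hh2]] : exists h : vec n -> Z,
    (forall x (i : 'I_n), i < m -> Z.abs (h (flip x i) - h x) = 1%Z) /\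
    (forall x, ((h x - Z.of_nat (c x)) mod 3 = 0)%Z).
  apply: IH; first by apply: ltnW.
  by move=> x i lt; apply: Hc; apply: ltnW.
pose im : 'I_n := Ordinal lemn.
have nz : forall z, ((h z - h (flip z im)) mod 3 <> 0)%Z.
  move=> z.
  have := Hc z im (ltnSn m).
  have := Hh2 z; have := Hh2 (flip z im).
  have := ltn_ord (c z); have := ltn_ord (c (flip z im)).
  move: (c z) (c (flip z im)) => a b.
  move=> Hb Ha E1 E2 Hne.
  have : (nat_of_ord a <> nat_of_ord b) by move=> E; move/eqP: Hne; apply; apply: val_inj.
  move=> Hne'.
  Z.div_mod_to_equations. lia.
pose e (z : vec n) := (h z - h (flip z im))%Z.
pose h' (z : vec n) := if z im then (h z - adj (e z))%Z else h z.
exists h'; split; last first.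
  move=> x; rewrite /h'; case: (x im) => //.
  have := Hh2 x. rewrite /adj. intros. Z.div_mod_to_equations. lia.
move=> x i; rewrite ltnS leq_eqVlt => /orP [/eqP Ei | Hi].
  have -> : i = im by apply: val_inj.
  rewrite /h' flip_at.
  case Ex: (x im) => /=.
    have := r_spec (nz x); rewrite /e; lia.
  rewrite /e flipK.
  have := r_spec (nz (flip x im)); rewrite /e flipK; lia.
have nei : i != im.
  apply/eqP => E; move: Hi; rewrite E /= ltnn //.
rewrite /h' flip_im //.
case: (x im) => //; last by apply: Hh1.
have H1 := Hh1 x i Hi.
have H2 := Hh1 (flip x im) i Hi.
have := r_step (nz x) _ H1 H2.
rewrite flipC in H2 *.
have -> : (e x + (h (flip x i) - h x) - (h (flip (flip x i) im) - h (flip x im)) = e (flip x i))%Z.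
  rewrite /e; lia.
move=> /(_ (nz (flip x i))) E; rewrite /e in E *; lia.
Qed.
Lemma ivt_aux (a : nat -> Z) N : (forall k, k < N -> (Z.abs (a k.+1 - a k) <= 2)%Z) ->
  (forall k, k <= N -> (a k mod 2 = 0)%Z) ->
  forall M, M <= N -> (0 <= a O)%Z -> (a M <= 0)%Z -> exists k, k <= M /\ a k = 0%Z.
Proof.
move=> Hs He; elim=> [|M IH] HM H0 HaM.
  by exists 0; split => //; lia.
have [HaM'|HaM'] := Z_le_gt_dec (a M) 0.
  have [k [Hk Hak]] := IH (ltnW HM) H0 HaM'.
  by exists k; split => //; apply: leq_trans Hk _.
exists M.+1; split => //.
have := Hs M HM; have := He M (ltnW HM).
intros. Z.div_mod_to_equations. lia.
Qed.

Lemma ivt (a : nat -> Z) N : (forall k, k < N -> (Z.abs (a k.+1 - a k) <= 2)%Z) ->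
  (forall k, k <= N -> (a k mod 2 = 0)%Z) -> a N = (- a O)%Z ->
  exists k, k <= N /\ a k = 0%Z.
Proof.
move=> Hs He HN.
have [H0|H0] := Z_le_gt_dec 0 (a 0).
  apply: (ivt_aux Hs He (leqnn N)) => //; lia.
have Hs' : forall k, k < N -> (Z.abs ((fun k => - a k)%Z k.+1 - (fun k => - a k)%Z k) <= 2)%Z.
  move=> k Hk; have := Hs k Hk; lia.
have He' : forall k, k <= N -> ((fun k => - a k)%Z k mod 2 = 0)%Z.
  move=> k Hk; have := He k Hk; intros; Z.div_mod_to_equations; lia.
have [k [Hk Hak]] := @ivt_aux (fun k => - a k)%Z N Hs' He' N (leqnn N) ltac:(lia) ltac:(lia).
by exists k; split => //; lia.
Qed.

Lemma hamming_gt0 n (x y : vec n) : 0 < hamming x y -> x != y.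
Proof.
move=> H; apply/eqP => E; move: H; rewrite /hamming E.
have -> : [set i | y i != y i] = set0 by apply/setP => i; rewrite !inE eqxx.
by rewrite cards0.
Qed.

Lemma card_lt n m : m <= n -> #|[set k : 'I_n | k < m]| = m.
Proof.
move=> Hm; rewrite -sum1_card.
rewrite (eq_bigl (fun k : 'I_n => k < m)); last by move=> k; rewrite inE.
rewrite -(big_ord_widen _ (fun _ => 1) Hm).
by rewrite sum1_card card_ord.
Qed.

Section Main.
Variables (n m : nat).
Hypotheses (m2 : 2 <= m) (mev : ~~ odd m) (mn : m <= n) (nm : n <= m.+1).

Definition par (x : vec n) : bool := odd (\sum_(k < n | k < m) x k).
Definition psi (x : vec n) : vec n := [ffun k : 'I_n => ((k < m) && x k) (+) par x].
Definition A (x : vec n) : vec n := [ffun k : 'I_n => if k < m then ~~ x k else x k].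
Definition v (j : nat) : vec n := [ffun k : 'I_n => k < j].

Lemma par_flip x (i : 'I_n) : i < m -> par (flip x i) = ~~ par x.
Proof.
move=> Hi; rewrite /par (bigD1 i) //= [X in _ = ~~ odd X](bigD1 i) //=.
rewrite flip_at (eq_bigr (fun k : 'I_n => (x k : nat))); last first.
  by move=> k /andP [_ Hk]; rewrite flip_im // eq_sym.
by rewrite !oddD !oddb; case: (x i); case: (odd _).
Qed.

Lemma par_A x : par (A x) = par x.
Proof.
rewrite /par.
have E : \sum_(k < n | k < m) A x k + \sum_(k < n | k < m) x k = m.
  rewrite -big_split /=.
  rewrite (eq_bigr (fun _ => 1)); last by move=> k Hk; rewrite ffunE Hk addn_negb.
  by rewrite -(big_ord_widen _ (fun _ => 1) mn) sum1_card card_ord.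
move: E => /(congr1 odd); rewrite oddD (negbTE mev).
by case: (odd _); case: (odd _).
Qed.

Lemma ham_flip x (i : 'I_n) : i < m -> H2adj (psi x) (psi (flip x i)).
Proof.
move=> Hi.
have Hh : hamming (psi x) (psi (flip x i)) = n.-1.
  rewrite /hamming; transitivity #|[set~ i]|; last by rewrite cardsC1 card_ord. apply: eq_card => k.
  rewrite !inE !ffunE par_flip //.
  case: (k =P i) => [->|Hk]; first by rewrite ?eqxx Hi /=; case: (x i); case: (par x).
  by case: (_ && _); case: (par x).
rewrite /H2adj Hh leqnn andbT; apply: hamming_gt0; rewrite Hh; lia.
Qed.

Lemma ham_A x : H2adj (psi x) (psi (A x)).
Proof.
have Hh : hamming (psi x) (psi (A x)) = m.
  rewrite /hamming -(card_lt mn); apply: eq_card => k.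
  rewrite !inE !ffunE par_A.
  by case: (k < m) => /=; case: (x k); case: (par x).
rewrite /H2adj Hh; apply/andP; split; last lia.
apply: hamming_gt0; rewrite Hh; lia.
Qed.

Lemma v_step k (hk : k < n) : v k.+1 = flip (v k) (Ordinal hk).
Proof.
apply/ffunP => i; rewrite !ffunE ltnS leq_eqVlt.
case: (i =P Ordinal hk) => [->|Hi] /=; first by rewrite eqxx ltnn.
have -> : (val i == k) = false; last by [].
by apply/eqP => E; apply: Hi; apply: val_inj.
Qed.

Lemma Av_step k (hk : k < n) : k < m -> A (v k.+1) = flip (A (v k)) (Ordinal hk).
Proof.
move=> km; apply/ffunP => i; rewrite !ffunE.
case: (i =P Ordinal hk) => [->|Hi] /=; first by rewrite /= km ltnn ltnSn.
rewrite [i < k.+1]ltnS [i <= k]leq_eqVlt.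
have -> : (val i == k) = false; last by [].
by apply/eqP => E; apply: Hi; apply: val_inj.
Qed.

Lemma Av0 : A (v 0) = v m.
Proof. by apply/ffunP => i; rewrite !ffunE; case: (i < m). Qed.

Lemma Avm : A (v m) = v 0.
Proof. by apply/ffunP => i; rewrite !ffunE; case: (i < m). Qed.

Lemma no3 (col : vec n -> 'I_3) : proper_colouring (@H2adj n) col -> False.
Proof.
move=> Hcol.
pose c x := col (psi x).
have [h [Hh1 Hh2]] := @height n c m mn (fun x i Hi => Hcol _ _ (ham_flip x Hi)).
pose g k := (h (A (v k)) - h (v k))%Z.
have Hv : forall k, k < m -> Z.abs (h (v k.+1) - h (v k)) = 1%Z.
  move=> k km; have hk : k < n by apply: leq_trans km mn.
  by rewrite (v_step hk); apply: Hh1.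
have HAv : forall k, k < m -> Z.abs (h (A (v k.+1)) - h (A (v k))) = 1%Z.
  move=> k km; have hk : k < n by apply: leq_trans km mn.
  by rewrite (Av_step hk km); apply: Hh1.
have Hpar : forall k, k <= m -> ((h (v k) - h (v O) - Z.of_nat k) mod 2 = 0)%Z.
  elim=> [|k IH] km; first by rewrite Z.sub_diag.
  have := IH (ltnW km); have := Hv k km.
  rewrite Nat2Z.inj_succ. intros. Z.div_mod_to_equations. lia.
have g0 : (g O mod 2 = 0)%Z.
  rewrite /g Av0; have := Hpar m (leqnn m).
  have [t Et] : exists t, m = t.*2.
    by exists m./2; rewrite -[LHS](odd_double_half m) (negbTE mev).
  rewrite Et -muln2 Nat2Z.inj_mul. intros. Z.div_mod_to_equations. lia.
have Hg : forall k, k <= m -> (g k mod 2 = 0)%Z.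
  elim=> [|k IH] km //.
  have := IH (ltnW km); have := Hv k km; have := HAv k km.
  rewrite /g. intros. Z.div_mod_to_equations. lia.
have gm : g m = (- g O)%Z by rewrite /g Av0 Avm; lia.
have [k [km gk]] := @ivt g m (fun k km => ltac:(have := Hv k km; have := HAv k km; rewrite /g; lia)) Hg gm.
have := Hcol _ _ (ham_A (v k)).
have := Hh2 (v k); have := Hh2 (A (v k)).
rewrite /c; move: gk; rewrite /g.
have := ltn_ord (col (psi (v k))); have := ltn_ord (col (psi (A (v k)))).
move: (col (psi (v k))) (col (psi (A (v k)))) => a b Hb Ha gk E1 E2 Hne.
have : (nat_of_ord a <> nat_of_ord b) by move=> E; move/eqP: Hne; apply; apply: val_inj.
move=> Hne'. Z.div_mod_to_equations. lia.
Qed.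

End Main.

Lemma pred2 k : 2 <= k -> odd k -> 2 <= k.-1.
Proof. by case: k => [|[|[|k]]]. Qed.

Lemma odd_pred k : odd k -> ~~ odd k.-1.
Proof. by case: k => // k /=; rewrite negbK. Qed.

Theorem theorem3p3 (n : nat) : 2 <= n -> chromatic_number_is (@H2adj n) 4.
Proof.
move=> n2; split.
  have i0 : 0 < n by apply: leq_trans n2.
  pose j0 : 'I_n := Ordinal i0.
  pose j1 : 'I_n := Ordinal n2.
  have bnd : forall x : vec n, 2 * x j0 + x j1 < 4 by move=> x; case: (x j0); case: (x j1).
  exists (fun x => Ordinal (bnd x)) => x y /andP [_ Hxy].
  apply/negP => /eqP [] E.
  have [E0 E1] : x j0 = y j0 /\ x j1 = y j1.
    by move: E; case: (x j0); case: (y j0); case: (x j1); case: (y j1).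
  have Hsub : [set i | x i != y i] \subset ~: [set j0; j1].
    apply/subsetP => i; rewrite !inE; apply: contra => /orP [] /eqP ->.
    - by rewrite E0.
    - by rewrite E1.
  have := subset_leq_card Hsub.
  have := cardsC [set j0; j1]; rewrite cards2 card_ord.
  have -> : (j0 != j1) = true by [].
  move: Hxy; rewrite /hamming => H1 H2 H3; simpl in H2; have := leq_trans H1 H3; move: H2; move: (#|~: [set j0; j1]|) => t; lia.
move=> j j4 [col Hcol].
have j3 : j <= 3 by [].
pose col3 x := widen_ord j3 (col x).
have Hc3 : proper_colouring (@H2adj n) col3.
  move=> x y Hxy; have := Hcol x y Hxy; apply: contra => /eqP E.
  by apply/eqP; apply: val_inj; move: E => /(congr1 val).
case Hodd: (odd n).
- apply: (@no3 n n.-1 _ _ _ _ col3 Hc3).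
  + exact: pred2.
  + exact: odd_pred.
  + exact: leq_pred.
  + by rewrite leqSpred.
- by apply: (@no3 n n n2 _ (leqnn n) (leqnSn n) col3 Hc3); rewrite Hodd.
Qed.
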